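(* For a connected hypergraph $\mathcal{G}=(V,E)$ on $n$ vertices, $$\operatorname{diam}(\mathcal{G})\ge\frac{4}{n\,(r(\mathcal{G})-1)\,\lambda_2(L_{\mathcal{G}})}.$$
   Context: A hypergraph $\mathcal{G}=(V,E)$ has a finite vertex set $V$ and a set $E$ of subsets of $V$ (edges), each of cardinality at least $2$. The rank $r(\mathcal{G})$ is the maximum edge cardinality. The degree $d_i$ is the number of edges containing $i$. The Laplacian $L_{\mathcal{G}}$ has $(L_{\mathcal{G}})_{ii}=d_i$ and $(L_{\mathcal{G}})_{ij}=-\sum_{e\in E,\, i,j\in e}\frac{1}{|e|-1}$ for $i\ne j$; $\lambda_2(L_{\mathcal{G}})$ is its second smallest eigenvalue. A path of length $l$ between $v_0,v_l$ is an alternating sequence $v_0e_1v_1\dots e_lv_l$ of distinct vertices and distinct edges with $v_{i-1},v_i\in e_i$; $d(i,j)$ is the minimum length of an $i$–$j$ path and $\operatorname{diam}(\mathcal{G})=\max_{i,j}d(i,j)$; connected means all distances are finite. *)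

(* Defs.v *)
From mathcomp Require Import all_boot all_order all_algebra.
From mathcomp Require Import reals.
Set Implicit Arguments. Unset Strict Implicit. Unset Printing Implicit Defensive.
Import Order.TTheory GRing.Theory Num.Theory.
Local Open Scope ring_scope.

Definition hypergraph (n : nat) (E : {set {set 'I_n}}) : Prop :=
  forall e, e \in E -> (2 <= #|e|)%N.

Definition hrank (n : nat) (E : {set {set 'I_n}}) : nat := \max_(e in E) #|e|.

Definition hdeg (n : nat) (E : {set {set 'I_n}}) (i : 'I_n) : nat :=
  #|[set e in E | i \in e]|.

Definition hlaplacian (R : realType) (n : nat) (E : {set {set 'I_n}}) : 'M[R]_n :=
  \matrix_(i, j) (if i == j then (hdeg E i)%:R
                  else - \sum_(e in E | (i \in e) && (j \in e)) ((#|e| - 1)%:R)^-1).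

Definition hpath (n : nat) (E : {set {set 'I_n}}) (k : nat) (u v : 'I_n) : bool :=
  [exists vs : k.+1.-tuple 'I_n, exists es : k.-tuple {set 'I_n},
     [&& uniq vs, uniq es, nth u vs 0 == u, nth u vs k == v &
       [forall m : 'I_k,
          [&& nth set0 es m \in E, nth u vs m \in nth set0 es m &
              nth u vs m.+1 \in nth set0 es m]]]].

Definition hconnected (n : nat) (E : {set {set 'I_n}}) : Prop :=
  forall u v : 'I_n, exists k, hpath E k u v.

(* Any path has length < n (its
   vertices are distinct), so the minimum over k < n is the true minimum
   whenever a path exists (the value n is only returned when none exists). *)
Definition hdist (n : nat) (E : {set {set 'I_n}}) (u v : 'I_n) : nat :=
  \big[minn/n]_(k < n | hpath E k u v) k.

Definition hdiam (n : nat) (E : {set {set 'I_n}}) : nat :=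
  \max_(u : 'I_n) \max_(v : 'I_n) hdist E u v.

(* Main.v *)
Require Import Defs.
From mathcomp Require Import all_boot all_order all_algebra.
From mathcomp Require Import reals.
From mathcomp Require Import ring lra zify.
Import Order.TTheory GRing.Theory Num.Theory.
Local Open Scope ring_scope.

Lemma sum_const_in (R : realFieldType) (I : finType) (A : pred I) (c : R) :
  \sum_(i in A) c = #|A|%:R * c.
Proof. by rewrite sumr_const mulr_natl. Qed.

Lemma key (R : realFieldType) (I : finType) (A : pred I) (a : I -> R) :
  #|A|%:R * \sum_(i in A) a i ^+ 2 - (\sum_(i in A) a i) ^+ 2
  = 2^-1 * \sum_(i in A) \sum_(j in A) (a i - a j) ^+ 2.
Proof.
set S := \sum_(i in A) a i; set S2 := \sum_(i in A) a i ^+ 2.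
have E1 i : \sum_(j in A) (a i - a j)^+2 = #|A|%:R * a i^+2 - 2 * a i * S + S2.
  rewrite (eq_bigr (fun j => (a i ^+2 - 2 * a i * a j) + a j ^+2)); last first.
    by move=> j _; rewrite sqrrB; ring.
  rewrite big_split /= sumrB sum_const_in /S2 /S mulr_sumr; done.
rewrite (eq_bigr _ (fun i _ => E1 i)) big_split /= sumrB -!mulr_sumr -mulr_suml.
rewrite sum_const_in -mulr_sumr -/S -/S2.
have h2 : (2:R) != 0 by rewrite pnatr_eq0.
field. by [].
Qed.


Definition cw (R : realType) {n : nat} (e : {set 'I_n}) : R := ((#|e| - 1)%:R)^-1.
Definition ww (R : realType) {n} (e : {set 'I_n}) (i j : 'I_n) : R :=
  if (i \in e) && (j \in e) then cw R e * ((i == j)%:R * #|e|%:R - 1) else 0.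

Lemma cw_inv (R : realType) {n} (e : {set 'I_n}) : (2 <= #|e|)%N ->
  cw R e * (#|e|%:R - 1) = 1.
Proof.
move=> h; rewrite /cw -(natrB _ (ltnW h)) mulVf // pnatr_eq0 subn_eq0 -ltnNge //.
Qed.

Lemma lap_rep (R : realType) {n} (E : {set {set 'I_n}}) : hypergraph E ->
  forall i j, hlaplacian R E i j = \sum_(e in E) ww R e i j.
Proof.
move=> hE i j; rewrite mxE; case: eqP => [<-|/eqP nij].
  rewrite (eq_bigr (fun e : {set 'I_n} => if i \in e then (1:R) else 0)); last first.
    by move=> e eE; rewrite /ww andbb eqxx mul1r; case: ifP => // _; rewrite cw_inv // hE.
  rewrite -big_mkcondr /= sumr_const /hdeg; congr (_ %:R).
  by apply: eq_card => e; rewrite !inE.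
rewrite [RHS](eq_bigr (fun e : {set 'I_n} => if (i \in e) && (j \in e) then - cw R e else (0:R))); last first.
  move=> e eE; rewrite /ww; case: ifP => // _.
  have -> : (i == j) = false by apply/negbTE.
  by rewrite mul0r sub0r mulrN1.
by rewrite -big_mkcondr /= sumrN.
Qed.


Lemma edge_form (R : realType) n (e : {set 'I_n}) (a : 'I_n -> R) :
  \sum_i \sum_j a i * ww R e i j * a j =
  cw R e * (#|e|%:R * \sum_(i in e) a i ^+ 2 - (\sum_(i in e) a i) ^+ 2).
Proof.
set S := \sum_(i in e) a i; set k : R := #|e|%:R.
have inner i : i \in e -> \sum_(j in e) a i * (cw R e * ((i == j)%:R * k - 1)) * a j
    = cw R e * k * a i ^+ 2 - cw R e * a i * S.
  move=> ie; have SD : S = a i + \sum_(j in e | j != i) a j by rewrite /S (bigD1 i).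
  rewrite SD (bigD1 i) //= eqxx.
  rewrite (eq_bigr (fun j => - (cw R e * a i * a j))); last first.
    by move=> j /andP[_ ji]; rewrite eq_sym (negbTE ji) /=; ring.
  rewrite sumrN -mulr_sumr -[true%:R]/(1:R); ring.
rewrite (eq_bigr (fun i => if i \in e then
   \sum_(j in e) a i * (cw R e * ((i == j)%:R * k - 1)) * a j else 0)); last first.
  move=> i _; case: ifP => ie.
    rewrite [RHS]big_mkcond; apply: eq_bigr => j _; rewrite /ww ie /=.
    by case: (j \in e) => //; rewrite mulr0 mul0r.
  by apply: big1 => j _; rewrite /ww ie /= mulr0 mul0r.
rewrite -big_mkcond /= (eq_bigr _ inner) sumrB -!mulr_sumr -mulr_suml -mulr_sumr -/S; ring.
Qed.


Definition Tq {R : realType} {n : nat} (e : {set 'I_n}) (a : 'I_n -> R) : R :=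
  #|e|%:R * \sum_(i in e) a i ^+ 2 - (\sum_(i in e) a i) ^+ 2.

Lemma Tq_ge0 {R : realType} n (e : {set 'I_n}) (a : 'I_n -> R) : 0 <= Tq e a.
Proof.
rewrite /Tq key; apply: mulr_ge0; first by rewrite invr_ge0.
by apply: sumr_ge0 => i _; apply: sumr_ge0 => j _; apply: sqr_ge0.
Qed.

Lemma one_term {R : realType} (I : finType) (A : pred I) (G : I -> R) p :
  p \in A -> (forall i, i \in A -> 0 <= G i) -> G p <= \sum_(i in A) G i.
Proof.
move=> pA hG; rewrite (bigD1 p) //= lerDl; apply: sumr_ge0 => i /andP[iA _].
exact: hG.
Qed.

Lemma two_terms {R : realType} (I : finType) (A : pred I) (G : I -> R) p q :
  p \in A -> q \in A -> p != q -> (forall i, i \in A -> 0 <= G i) ->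
  G p + G q <= \sum_(i in A) G i.
Proof.
move=> pA qA pq hG; rewrite (bigD1 p) //= lerD2l (bigD1 q) /=; last first.
  by rewrite qA eq_sym.
rewrite lerDl; apply: sumr_ge0 => i /andP[/andP[iA _] _]; exact: hG.
Qed.

Lemma Tq_pair {R : realType} n (e : {set 'I_n}) (a : 'I_n -> R) p q :
  p \in e -> q \in e -> p != q -> (a p - a q) ^+ 2 <= Tq e a.
Proof.
move=> pe qe pq; rewrite /Tq key.
have h := @two_terms _ _ (mem e) (fun i => \sum_(j in e) (a i - a j) ^+ 2) p q pe qe pq.
have h1 : (a p - a q) ^+ 2 <= \sum_(j in e) (a p - a j) ^+ 2.
  by apply: (@one_term _ _ (mem e) (fun j => (a p - a j) ^+ 2)) => // j _; apply: sqr_ge0.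
have h2 : (a q - a p) ^+ 2 <= \sum_(j in e) (a q - a j) ^+ 2.
  by apply: (@one_term _ _ (mem e) (fun j => (a q - a j) ^+ 2)) => // j _; apply: sqr_ge0.
have h3 : (a q - a p) ^+ 2 = (a p - a q) ^+ 2 by ring.
have := h (fun i _ => sumr_ge0 _ (fun j _ => sqr_ge0 (a i - a j))) => /= h4.
lra.
Qed.

Lemma Q_form {R : realType} n (E : {set {set 'I_n}}) (a : 'I_n -> R) :
  hypergraph E ->
  \sum_j (\sum_i a i * hlaplacian R E i j) * a j =
  \sum_(e in E) cw R e * Tq e a.
Proof.
move=> hE.
transitivity (\sum_j \sum_i \sum_(e in E) a i * ww R e i j * a j).
  apply: eq_bigr => j _; rewrite mulr_suml; apply: eq_bigr => i _.
  by rewrite lap_rep // mulr_sumr mulr_suml.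
rewrite exchange_big /=.
under eq_bigr do rewrite exchange_big /=.
rewrite exchange_big /=; apply: eq_bigr => e _; exact: edge_form.
Qed.

Lemma rowsum0 (R : realType) n (E : {set {set 'I_n}}) i :
  hypergraph E -> \sum_j hlaplacian R E i j = 0.
Proof.
move=> hE; under eq_bigr do rewrite lap_rep //.
rewrite exchange_big /=; apply: big1 => e eE.
case ie: (i \in e); last by apply: big1 => j _; rewrite /ww ie.
rewrite big_mkcond /=.
rewrite (eq_bigr (fun j => if j \in e then cw R e * ((i == j)%:R * #|e|%:R - 1) else 0)); last first.
  by move=> j _; rewrite /ww ie.
rewrite -big_mkcond /= (bigD1 i) //= eqxx.
rewrite (eq_bigr (fun j => - cw R e)); last first.
  by move=> j /andP[_ ji]; rewrite eq_sym (negbTE ji) /= mul0r sub0r mulrN1.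
rewrite sumrN sumr_const -[true%:R]/(1:R) mul1r.
have -> : #|e| = #|[pred j in e | j != i]|.+1.
  rewrite (cardD1 i) ie; congr (_.+1); apply: eq_card => j; rewrite !inE andbC.
  done.
rewrite -mulr_natr -natr1; ring.
Qed.


Lemma CS {R : realType} (d : nat) (f : 'I_d -> R) :
  (\sum_(m < d) f m) ^+ 2 <= d%:R * \sum_(m < d) f m ^+ 2.
Proof.
have K := @key R _ (fun _ : 'I_d => true) f.
rewrite card_ord in K.
have : 0 <= 2^-1 * \sum_(i in (fun _ : 'I_d => true)) \sum_(j in (fun _ : 'I_d => true)) (f i - f j) ^+ 2.
  apply: mulr_ge0; first by rewrite invr_ge0.
  by apply: sumr_ge0 => i _; apply: sumr_ge0 => j _; apply: sqr_ge0.
rewrite -K subr_ge0; done.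
Qed.

Lemma sub_sum {R : realType} (I : finType) (s : seq I) (A : pred I) (g : I -> R) :
  uniq s -> {subset s <= A} -> (forall i, A i -> 0 <= g i) ->
  \sum_(i <- s) g i <= \sum_(i in A) g i.
Proof.
move=> us sA hg; rewrite big_uniq // (bigID (mem s) (mem A)) /=.
have -> : \sum_(i in s) g i = \sum_(i in A | i \in s) g i.
  apply: eq_bigl => i /=; case si: (i \in s) => //.
    by rewrite andbT (sA _ si).
  by rewrite andbF.
rewrite lerDl; apply: sumr_ge0 => i /andP[iA _]; exact: hg.
Qed.

Lemma cw_ge0 (R : realType) n (e : {set 'I_n}) : 0 <= cw R e.
Proof. by rewrite /cw invr_ge0 ler0n. Qed.

Lemma cw_bound (R : realType) n (E : {set {set 'I_n}}) e :
  hypergraph E -> e \in E -> 1 <= ((hrank E)%:R - 1) * cw R e.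
Proof.
move=> hE eE; have h := cw_inv R e (hE e eE); have c0 := cw_ge0 R _ e.
have : (#|e| <= hrank E)%N.
  exact: (@leq_bigmax_cond _ (mem E) (fun e => #|e|) e eE).
rewrite -(ler_nat R) => hk; nra.
Qed.


Lemma path_bound (R : realType) n (E : {set {set 'I_n}}) (a : 'I_n -> R) d u v :
  hypergraph E -> hpath E d u v ->
  (a v - a u) ^+ 2 <= d%:R * (((hrank E)%:R - 1) * \sum_(e in E) cw R e * Tq e a).
Proof.
move=> hE /existsP[vs /existsP[es /and5P[uvs ues h0 hd /forallP hm]]].
set p := fun m : nat => nth u vs m.
set r1 : R := (hrank E)%:R - 1.
set g := fun e : {set 'I_n} => cw R e * Tq e a.
have tel : a v - a u = \sum_(m < d) (a (p m.+1) - a (p m)).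
  rewrite -(big_mkord xpredT (fun m => a (p m.+1) - a (p m))) telescope_sumr //.
  by rewrite /p (eqP hd) (eqP h0).
have step (m : 'I_d) : (a (p m.+1) - a (p m)) ^+ 2 <= r1 * g (nth set0 es m).
  have /and3P[fE pin qin] := hm m.
  have neq : p m.+1 != p m.
    have := ltn_ord m => hmd.
    rewrite /p (nth_uniq u) ?size_tuple //; lia.
  have := @Tq_pair R n _ a _ _ qin pin neq.
  have := cw_bound R _ _ _ hE fE. have := @Tq_ge0 R n (nth set0 es m) a.
  have := cw_ge0 R _ (nth set0 es m).
  rewrite /g /r1; nra.
have h1 : (a v - a u) ^+ 2 <= d%:R * \sum_(m < d) (a (p m.+1) - a (p m)) ^+ 2.
  by rewrite tel; apply: CS.
have h2 : \sum_(m < d) (a (p m.+1) - a (p m)) ^+ 2 <= r1 * \sum_(m < d) g (nth set0 es m).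
  by rewrite mulr_sumr; apply: ler_sum => m _; apply: step.
have h3 : \sum_(m < d) g (nth set0 es m) <= \sum_(e in E) g e.
  have -> : \sum_(m < d) g (nth set0 es m) = \sum_(e <- es) g e.
    by rewrite big_tuple; apply: eq_bigr => m _; rewrite (tnth_nth set0).
  apply: sub_sum => //.
    move=> e ees; rewrite -(nth_index set0 ees).
    have hi : (index e es < d)%N by have := index_mem e es; rewrite size_tuple ees.
    by have /and3P[] := hm (Ordinal hi).
  by move=> e _; rewrite /g; apply: mulr_ge0; [apply: cw_ge0 | apply: Tq_ge0].
case: (posnP d) => [d0 | dpos].
  by move: h1; rewrite d0 !mul0r.
have r0 : 0 <= r1.
  have /and3P[fE _ _] := hm (Ordinal dpos).
  have := cw_bound R _ _ _ hE fE; have := cw_ge0 R _ (nth set0 es 0).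
  rewrite -/r1; nra.
apply: (le_trans h1); apply: ler_wpM2l; first exact: ler0n.
apply: (le_trans h2); apply: ler_wpM2l => //.
Qed.


Lemma hdist_path n (E : {set {set 'I_n}}) u v : hconnected E ->
  exists2 d, hpath E d u v & (d <= hdist E u v)%N.
Proof.
move=> hc; have [k0 hk0] := hc u v.
have k0n : (k0 <= n)%N.
  move: (hk0) => /existsP[vs /existsP[es /and5P[uvs _ _ _ _]]].
  have := max_card (mem vs); rewrite card_ord (card_uniqP uvs) size_tuple.
  by move/ltnW.
rewrite /hdist; apply: (big_ind (fun y => exists2 d, hpath E d u v & (d <= y)%N)).
- by exists k0.
- move=> x y [d1 h1 l1] [d2 h2 l2]; case: (leqP x y) => xy.
    by exists d1 => //; rewrite (minn_idPl xy).
  by exists d2 => //; rewrite (minn_idPr (ltnW xy)).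
- by move=> k hk; exists k.
Qed.

Lemma hdist_diam n (E : {set {set 'I_n}}) u v : (hdist E u v <= hdiam E)%N.
Proof.
rewrite /hdiam.
apply: (leq_trans (@leq_bigmax _ (fun v => hdist E u v) v)).
exact: (@leq_bigmax _ (fun u => \max_v hdist E u v) u).
Qed.

Lemma spread {R : realType} n (a : 'I_n -> R) M m :
  (forall i, m <= a i <= M) -> \sum_i a i = 0 ->
  4 * \sum_i a i ^+ 2 <= n%:R * (M - m) ^+ 2.
Proof.
move=> hb hs.
have h : \sum_i (a i - M) * (a i - m) <= \sum_(i : 'I_n) (0:R).
  apply: ler_sum => i _; have /andP[h1 h2] := hb i; nra.
rewrite big1_eq in h.
have e : \sum_i (a i - M) * (a i - m) = \sum_i a i ^+ 2 - (M + m) * \sum_i a i + n%:R * (M * m).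
  rewrite (eq_bigr (fun i : 'I_n => (a i ^+ 2 - (M + m) * a i) + M * m)); last first. move=> i _. ring.
  by rewrite big_split sumrB /= -mulr_sumr sumr_const card_ord mulr_natl.
rewrite e hs in h.
have := mulr_ge0 (ler0n R n) (sqr_ge0 (M + m)).
nra.
Qed.

Lemma argmax_ex {R : realType} n (a : 'I_n -> R) (i0 : 'I_n) :
  exists u, forall i, a i <= a u.
Proof.
case: (@arg_maxP _ _ _ i0 xpredT a isT) => u _ hu; exists u => i; exact: hu.
Qed.

Lemma argmin_ex {R : realType} n (a : 'I_n -> R) (i0 : 'I_n) :
  exists u, forall i, a u <= a i.
Proof.
case: (@arg_minP _ _ _ i0 xpredT a isT) => u _ hu; exists u => i; exact: hu.
Qed.


Theorem theorem9 (R : realType) (n : nat) (E : {set {set 'I_n}})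
  (l : 'I_n -> R) (i1 : 'I_n) :
  (2 <= n)%N -> hypergraph E -> hconnected E ->
  (forall i j : 'I_n, (i <= j)%N -> l i <= l j) ->
  char_poly (hlaplacian R E) = \prod_(i < n) ('X - (l i)%:P) ->
  val i1 = 1%N ->
  4 / (n%:R * ((hrank E)%:R - 1) * l i1) <= (hdiam E)%:R.
Proof.
move=> n2 hE hc hl hchar hi1.
set L := hlaplacian R E; set l1 := l i1.
have rt : root (char_poly L) l1.
  by rewrite /root hchar horner_prod (bigD1 i1) //= hornerXsubC subrr mul0r.
have [x xL x0] : exists2 v : 'rV_n, v *m L = l1 *: v & v != 0.
  by apply/eigenvalueP; rewrite eigenvalue_root_char.
set a : 'I_n -> R := fun i => x 0 i.
have Lx j : \sum_i a i * L i j = l1 * a j.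
  by have := congr1 (fun M : 'M[R]_(1,n) => M 0 j) xL; rewrite !mxE.
set S2 := \sum_i a i ^+ 2.
set Q := \sum_(e in E) cw R e * Tq e a.
have QF : l1 * S2 = Q.
  rewrite /Q -Q_form // /S2 mulr_sumr; apply: eq_bigr => j _; rewrite Lx /a; ring.
have S2pos : 0 < S2.
  rewrite lt_neqAle sumr_ge0 ?andbT; last by move=> i _; apply: sqr_ge0.
  apply/negP => /eqP/esym S0; move/negP: x0; apply; apply/eqP/rowP => j.
  have := @psumr_eq0P _ _ _ (fun i => a i ^+ 2) (fun i _ => sqr_ge0 (a i)) S0 j isT.
  rewrite !mxE => /eqP; rewrite sqrf_eq0 => /eqP h; exact: h.
have Q0 : 0 <= Q.
  by apply: sumr_ge0 => e _; apply: mulr_ge0; [apply: cw_ge0 | apply: Tq_ge0].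
have l0 : 0 <= l1 by rewrite -(pmulr_lge0 _ S2pos) QF.
have hsum : l1 * \sum_i a i = 0.
  rewrite mulr_sumr -(eq_bigr _ (fun j _ => Lx j)) exchange_big /=.
  apply: big1 => i _; rewrite -mulr_sumr rowsum0 ?mulr0 //.
case: (eqVneq l1 0) => [->|l1n0]; first by rewrite mulr0 invr0 mulr0 ler0n.
have l1pos : 0 < l1 by rewrite lt_neqAle eq_sym l1n0.
have sa : \sum_i a i = 0 by move/eqP: hsum; rewrite mulf_eq0 (negbTE l1n0) => /eqP.
have npos : 0 < n%:R :> R by rewrite ltr0n; lia.
case: (leqP (hrank E) 1) => hr.
  have : (hrank E)%:R - 1 <= 0 :> R by rewrite subr_le0 lern1.
  move=> hr'; apply: (le_trans _ (ler0n R _)).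
  apply: mulr_ge0_le0; first by [].
  rewrite invr_le0; apply: mulr_le0_ge0 => //.
  by apply: mulr_ge0_le0 => //; apply: ltW.
set r1 : R := (hrank E)%:R - 1.
have r1pos : 0 < r1 by rewrite /r1 subr_gt0 ltr1n.
have [u hu] := @argmax_ex R n a i1.
have [v hv] := @argmin_ex R n a i1.
have [d hp hd] := @hdist_path n E u v hc.
have PB := path_bound R n E a d u v hE hp; rewrite -/r1 -/Q in PB.
have SP : 4 * S2 <= n%:R * (a u - a v) ^+ 2.
  by apply: spread => // i; rewrite hu hv.
have dD : d%:R <= (hdiam E)%:R :> R.
  by rewrite ler_nat; apply: (leq_trans hd); apply: hdist_diam.
have k1 : 4 * S2 <= (n%:R * d%:R * r1 * l1) * S2.
  apply: (le_trans SP).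
  have -> : (a u - a v) ^+ 2 = (a v - a u) ^+ 2 by ring.
  have -> : n%:R * d%:R * r1 * l1 * S2 = n%:R * (d%:R * (r1 * Q)) by rewrite -QF; ring.
  by apply: ler_wpM2l => //; apply: ltW.
rewrite ler_pM2r // in k1.
rewrite ler_pdivrMr; last by apply: mulr_gt0 => //; apply: mulr_gt0.
apply: (le_trans k1).
have -> : n%:R * d%:R * r1 * l1 = d%:R * (n%:R * r1 * l1) by ring.
apply: ler_wpM2r => //; apply: ltW; apply: mulr_gt0 => //; apply: mulr_gt0.
  by []. by []. Qed.
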